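(* Let $G:\mathbb{R}_+\to\mathbb{R}_+$ with $G(0)>0$ be a convolution kernel that preserves nonnegativity in the following sense: for any $K\in\mathbb{N}^*$, $x_1,\dots,x_K\in\mathbb{R}$ and $0\le t_1<\dots<t_K$ such that $\sum_{k'=1}^kx_{k'}G(t_k-t_{k'})\ge0$ for all $k\in\{1,\dots,K\}$, one has $\sum_{k:t_k\le t}x_kG(t-t_k)\ge0$ for all $t\ge0$. Let $\rho$ be a Borel measure on $\mathbb{R}_+$ finite on compact sets. Then the double kernels $\Gamma^r(t,s)=G(\rho((s,t]))$ and $\Gamma^\ell(t,s)=G(\rho([s,t)))$, $0\le s\le t$, preserve nonnegativity.
   Context: A double kernel $\Gamma:\{(t,s):0\le s\le t\}\to\mathbb{R}_+$ preserves nonnegativity if for every $T>0$, any $K\in\mathbb{N}^*$, $x_1,\dots,x_K\in\mathbb{R}$ and $0\le t_1<\dots<t_K<T$ with $\sum_{k'=1}^kx_{k'}\Gamma(t_k,t_{k'})\ge0$ for all $k$, one has $\sum_{k:t_k\le t}x_k\Gamma(t,t_k)\ge0$ for all $t\in[0,T]$. *)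

(* Defs.v *)
From HB Require Import structures.
From mathcomp Require Import all_boot all_order all_algebra.
From mathcomp Require Import all_classical all_reals all_analysis.
Set Implicit Arguments. Unset Strict Implicit. Unset Printing Implicit Defensive.
Import Order.TTheory GRing.Theory Num.Theory.
Import numFieldNormedType.Exports.
Local Open Scope ring_scope.
Local Open Scope classical_set_scope.

Definition admissible_times (R : realType) (K : nat) (t : 'I_K -> R) : Prop :=
  (forall i, 0 <= t i) /\ (forall i j : 'I_K, (i < j)%N -> t i < t j).

Definition conv_preserves_nonneg (R : realType) (G : R -> R) : Prop :=
  forall (K : nat) (x t : 'I_K -> R),
    (0 < K)%N -> admissible_times t ->
    (forall k : 'I_K, 0 <= \sum_(k' < K | (k' <= k)%N) x k' * G (t k - t k')) ->
    forall s : R, 0 <= s -> 0 <= \sum_(k < K | t k <= s) x k * G (s - t k).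

Definition double_preserves_nonneg (R : realType) (Gam : R -> R -> R) : Prop :=
  forall (T : R), 0 < T ->
  forall (K : nat) (x t : 'I_K -> R),
    (0 < K)%N -> admissible_times t -> (forall k, t k < T) ->
    (forall k : 'I_K, 0 <= \sum_(k' < K | (k' <= k)%N) x k' * Gam (t k) (t k')) ->
    forall s : R, 0 <= s <= T -> 0 <= \sum_(k < K | t k <= s) x k * Gam s (t k).

Definition Gamma_r (R : realType) (G : R -> R)
  (rho : {measure set R -> \bar R}) : R -> R -> R :=
  fun t s => G (fine (rho [set u | s < u <= t])).
Definition Gamma_l (R : realType) (G : R -> R)
  (rho : {measure set R -> \bar R}) : R -> R -> R :=
  fun t s => G (fine (rho [set u | s <= u < t])).

(* Main.v *)
Require Import Defs.
From HB Require Import structures.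
From mathcomp Require Import all_boot all_order all_algebra.
From mathcomp Require Import all_classical all_reals all_analysis.
Import Order.TTheory GRing.Theory Num.Theory.
Import numFieldNormedType.Exports.
Local Open Scope ring_scope.
Local Open Scope classical_set_scope.

Section Gen.
Variables (R : realType).

Definition mx (x : nat -> R) (i : nat) := fun j : nat =>
  if (j < i)%N then x j else if j == i then x i + x i.+1 else x j.+1.
Definition mt (t : nat -> R) (i : nat) := fun j : nat =>
  if (j <= i)%N then t j else t j.+1.

Lemma merge_sum (x t : nat -> R) i (h : R -> R) n :
  t i = t i.+1 -> (i < n)%N ->
  \sum_(0 <= j < n) mx x i j * h (mt t i j) = \sum_(0 <= k < n.+1) x k * h (t k).
Proof.
move=> eti; elim: n => [//|n IH] lin.
rewrite ltnS leq_eqVlt in lin; case/orP: lin => [/eqP <-|lin].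
  rewrite big_nat_recr //= big_nat_recr //= big_nat_recr //= -addrA.
  rewrite /mx /mt ltnn eqxx leqnn -eti mulrDl.
  have -> // : \sum_(0 <= i0 < i)
     (if (i0 < i)%N then x i0 else if i0 == i then x i + x i.+1 else x i0.+1) *
     h (if (i0 <= i)%N then t i0 else t i0.+1) = \sum_(0 <= i0 < i) x i0 * h (t i0).
  by apply: eq_big_nat => j /andP[_ ji]; rewrite ji ltnW.
rewrite big_nat_recr //= IH // [RHS]big_nat_recr //=.
by rewrite /mx /mt ltnNge (ltnW lin) /= gtn_eqF // leqNgt lin.
Qed.

Lemma merge_sum_small (x t : nat -> R) i (h : R -> R) n :
  (n <= i)%N ->
  \sum_(0 <= j < n) mx x i j * h (mt t i j) = \sum_(0 <= k < n) x k * h (t k).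
Proof.
move=> ni; apply: eq_big_nat => j /andP[_ jn].
by rewrite /mx /mt (leq_trans jn ni) ltnW // (leq_trans jn ni).
Qed.

Variable G : R -> R.
Hypothesis HG : conv_preserves_nonneg G.

Definition cut (s : R) (u : R) := if u <= s then G (s - u) else 0.

Lemma gen K : forall x t : nat -> R,
  (forall k, 0 <= t k) -> (forall i j, (i <= j)%N -> (j < K)%N -> t i <= t j) ->
  (forall k, (k < K)%N -> 0 <= \sum_(0 <= k' < k.+1) x k' * G (t k - t k')) ->
  forall s, 0 <= s -> 0 <= \sum_(0 <= k < K) x k * cut s (t k).
Proof.
elim: K => [|K IH] x t t0 tmon hyp s s0; first by rewrite big_geq.
have [[i [iK ti]]|strict] := pselect (exists i, (i.+1 < K.+1)%N /\ t i = t i.+1).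
  have iK' : (i < K)%N by [].
  rewrite -(merge_sum x t i (cut s) K ti iK').
  apply: (IH _ (mt t i)) => //.
  - by move=> k; rewrite /mt; case: ifP.
  - move=> a b ab bK; rewrite /mt.
    case: ifP => ai; case: ifP => bi.
    + by apply: tmon => //; apply: ltnW.
    + by apply: tmon; [apply: (leq_trans ab) | ].
    + by exfalso; move: ai; rewrite (leq_trans ab bi).
    + by apply: tmon.
  - move=> k kK.
    have [ki|ik] := ltnP k i.
      rewrite (merge_sum_small x t i (fun u => G (mt t i k - u))) //.
      have -> : mt t i k = t k by rewrite /mt ltnW.
      by apply: hyp; rewrite ltnS ltnW.
    have E := merge_sum x t i (fun u => G (mt t i k - u)) k.+1 ti ik; simpl in E; rewrite E.
    have -> : mt t i k = t k.+1.
      rewrite /mt; case: ifP => // ki.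
      by have -> : k = i by apply/eqP; rewrite eqn_leq ki ik.
    by apply: hyp.
have strict' : forall a b, (a < b)%N -> (b < K.+1)%N -> t a < t b.
  move=> a; elim=> [//|b IHb] ab bK.
  have tb : t b < t b.+1.
    rewrite lt_neqAle tmon // andbT; apply/eqP => e; apply: strict; by exists b.
  rewrite leq_eqVlt in ab; case/orP: ab => [/eqP [->] //|ab].
  by apply: lt_trans tb; apply: IHb => //; apply: ltnW.
pose x' := fun k : 'I_K.+1 => x k.
pose t' := fun k : 'I_K.+1 => t k.
rewrite big_mkord.
have -> : \sum_(i < K.+1) x i * cut s (t i) =
   \sum_(i < K.+1 | t' i <= s) x' i * G (s - t' i).
  rewrite [RHS]big_mkcond /=.
  by apply: eq_bigr => k _; rewrite /cut /x' /t'; case: ifP; rewrite ?mulr0.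
apply: (HG K.+1 x' t' (ltn0Sn K)) => //.
  split; [by move=> a; apply: t0 | move=> a b ab; apply: strict' => //; apply: ltn_ord].
move=> k; rewrite /x' /t'.
have := hyp k (ltn_ord k).
rewrite (big_nat_widen _ _ _ _ _ (ltn_ord k)) big_mkord.
by under eq_bigl do rewrite andbC ltnS.
Qed.

Lemma ord_sum_nat n (f : 'I_n.+1 -> R) :
  \sum_(k < n.+1) f k = \sum_(0 <= k < n.+1) f (inord k).
Proof. by rewrite big_mkord; apply: eq_bigr => k _; rewrite inord_val. Qed.

Lemma ord_sum_prefix n (f : 'I_n.+1 -> R) (k : 'I_n.+1) :
  \sum_(k' < n.+1 | (k' <= k)%N) f k' = \sum_(0 <= k' < (k : nat).+1) f (inord k').
Proof.
rewrite (big_nat_widen _ _ _ _ _ (ltn_ord k)) big_mkord.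
by apply: eq_big => [i|i _]; rewrite ?ltnS ?inord_val.
Qed.

Lemma main_gen (Gam : R -> R -> R) (F : R -> R) :
  (forall u, 0 <= u -> 0 <= F u) ->
  (forall u v, 0 <= u -> u <= v -> F u <= F v) ->
  (forall a b, 0 <= a -> a <= b -> Gam b a = G (F b - F a)) ->
  double_preserves_nonneg Gam.
Proof.
move=> F0 Fmon HGam T T0 [//|K0] x t _ [tpos tinc] tT hyp s /andP[s0 sT].
have tmon : forall a b : 'I_K0.+1, (a <= b)%N -> t a <= t b.
  move=> a b; rewrite leq_eqVlt => /orP[/eqP/val_inj -> //|ab].
  by apply/ltW/tinc.
have inordK : forall k, (k < K0.+1)%N -> (inord k : 'I_K0.+1) = k :> nat.
  by move=> k kK; rewrite inordK.
pose P k := t (inord k) <= s.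
have [m [mK Pm]] : exists m, (m <= K0.+1)%N /\
    forall k, (k < K0.+1)%N -> P k = (k < m)%N.
  have [ex|nex] := pselect (exists k, (k < K0.+1)%N && ~~ P k).
    case: (ex_minnP ex) => m /andP[mK nPm] mmin.
    exists m; split; first exact: ltnW.
    move=> k kK; apply/idP/idP => [Pk|km].
      rewrite ltnNge; apply/negP => mk; move: nPm; rewrite /P.
      by rewrite (le_trans (tmon _ _ _) Pk) // !inordK.
    apply/negPn/negP => nPk; have := mmin k; rewrite kK nPk => /(_ isT).
    by rewrite leqNgt km.
  exists K0.+1; split => // k kK; rewrite kK; apply/negPn/negP => nPk.
  by apply: nex; exists k; rewrite kK.
have -> : \sum_(k < K0.+1 | t k <= s) x k * Gam s (t k) =
    \sum_(0 <= k < m) x (inord k) * cut (F s) (F (t (inord k))).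
  rewrite big_mkcond ord_sum_nat (big_cat_nat (leq0n m) mK) /=.
  rewrite [X in _ + X]big_nat_cond [X in _ + X]big1 ?addr0; last first.
    move=> k /andP[/andP[mk kK] _]; have := Pm k kK; rewrite /P ltnNge mk /=.
    by move=> ->.
  apply: eq_big_nat => k /andP[_ km].
  have kK : (k < K0.+1)%N by apply: leq_trans mK.
  have Pk : P k by rewrite Pm.
  move: (Pk); rewrite /P => ->.
  by rewrite /cut (Fmon _ _ (tpos _) Pk) HGam.
apply: (gen m (fun k => x (inord k)) (fun k => F (t (inord k)))) => //.
- by move=> k; apply: F0.
- move=> a b ab bm; apply: Fmon => //; apply: tmon.
  by rewrite !inordK // (leq_trans _ mK) // (leq_ltn_trans ab).
- move=> k km.
  have kK : (k < K0.+1)%N by apply: leq_trans mK.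
  have := hyp (inord k); rewrite ord_sum_prefix inordK //.
  have -> // : \sum_(0 <= k' < k.+1) x (inord k') * Gam (t (inord k)) (t (inord k')) =
     \sum_(0 <= k' < k.+1) x (inord k') * G (F (t (inord k)) - F (t (inord k'))).
  apply: eq_big_nat => k' /andP[_ kk']; rewrite HGam //; apply: tmon.
  by rewrite !inordK // (leq_ltn_trans _ kK).
- exact: F0.
Qed.
End Gen.

Lemma fineU (R : realType) (rho : {measure set R -> \bar R}) (A B : set R) :
  measurable A -> measurable B -> A `&` B = set0 ->
  (rho A < +oo)%E -> (rho B < +oo)%E ->
  fine (rho (A `|` B)) = fine (rho A) + fine (rho B).
Proof.
move=> mA mB AB fA fB; rewrite measureU // fineD //.
  by rewrite ge0_fin_numE ?measure_ge0.
by rewrite ge0_fin_numE ?measure_ge0.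
Qed.

Theorem mainTheorem8 (R : realType) (G : R -> R)
  (rho : {measure set R -> \bar R}) :
  (forall u : R, 0 <= u -> 0 <= G u) ->
  0 < G 0 ->
  conv_preserves_nonneg G ->
  (forall A : set R, compact A -> A `<=` [set u | 0 <= u] -> (rho A < +oo)%E) ->
  double_preserves_nonneg (Gamma_r G rho) /\ double_preserves_nonneg (Gamma_l G rho).
Proof.
move=> G0 G0pos HG Hfin.
have mcc : forall a b : R, measurable [set v | a <= v <= b].
  by move=> a b; rewrite -set_itvcc; exact: measurable_itv.
have moc : forall a b : R, measurable [set v | a < v <= b].
  by move=> a b; rewrite -set_itvoc; exact: measurable_itv.
have mco : forall a b : R, measurable [set v | a <= v < b].
  by move=> a b; rewrite -set_itvco; exact: measurable_itv.
have fin : forall (b : R) (A : set R), measurable A ->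
    A `<=` [set v | 0 <= v <= b] -> (rho A < +oo)%E.
  move=> b A mA Ab; apply: (le_lt_trans (le_measure _ _ _ Ab)); rewrite ?inE //.
  apply: Hfin; first by rewrite -set_itvcc; exact: segment_compact.
  by move=> v /andP[].
have Fmon : forall (P : R -> R -> bool), (forall u, measurable [set v | P u v]) ->
    (forall u w v, u <= w -> P u v -> P w v) ->
    (forall u v, P u v -> 0 <= v <= u) ->
    forall u w, 0 <= u -> u <= w ->
    fine (rho [set v | P u v]) <= fine (rho [set v | P w v]).
  move=> P mP Pmon Pb u w u0 uw.
  have fu := fin u _ (mP u) (Pb u).
  have fw := fin w _ (mP w) (Pb w).
  apply: fine_le; rewrite ?ge0_fin_numE ?measure_ge0 //.
  by apply: le_measure; rewrite ?inE // => v; apply: Pmon.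
split.
  apply: (@main_gen R G HG _ (fun u => fine (rho [set v | 0 <= v <= u]))).
  - by move=> u _; apply: fine_ge0; apply: measure_ge0.
  - move=> u w u0 uw; apply: (Fmon (fun u v => 0 <= v <= u)) => //.
      by move=> a b v ab /andP[-> vb]; rewrite (le_trans vb ab).
  - move=> a b a0 ab; rewrite /Gamma_r; congr G.
    have -> : [set v | 0 <= v <= b] = [set v | 0 <= v <= a] `|` [set v | a < v <= b].
      apply/seteqP; split => v /=.
        move=> /andP[v0 vb]; case: (leP v a) => va; [left|right]; apply/andP; split => //.
      case=> /andP[v0 va]; apply/andP; split => //.
        by rewrite (le_trans va ab).
      by rewrite (le_trans a0 (ltW v0)).
    rewrite fineU //.
    + by rewrite addrC addKr.
    + apply/seteqP; split => v //= [/andP[_ va] /andP[av _]].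
      by move: (lt_le_trans av va); rewrite ltxx.
    + by apply: (fin a) => //.
    + by apply: (fin b) => // v /andP[av vb]; rewrite /= vb (le_trans a0 (ltW av)).
apply: (@main_gen R G HG _ (fun u => fine (rho [set v | 0 <= v < u]))).
- by move=> u _; apply: fine_ge0; apply: measure_ge0.
- move=> u w u0 uw; apply: (Fmon (fun u v => 0 <= v < u)) => //.
    by move=> a b v ab /andP[-> vb]; rewrite (lt_le_trans vb ab).
  by move=> a b /andP[-> /ltW].
- move=> a b a0 ab; rewrite /Gamma_l; congr G.
  have -> : [set v | 0 <= v < b] = [set v | 0 <= v < a] `|` [set v | a <= v < b].
    apply/seteqP; split => v /=.
      move=> /andP[v0 vb]; case: (ltP v a) => va; [left|right]; apply/andP; split => //.
    case=> /andP[v0 va]; apply/andP; split => //.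
      by rewrite (lt_le_trans va ab).
    by rewrite (le_trans a0 v0).
  rewrite fineU //.
  + by rewrite addrC addKr.
  + apply/seteqP; split => v //= [/andP[_ va] /andP[av _]].
    by move: (lt_le_trans va av); rewrite ltxx.
  + by apply: (fin a) => // v /andP[v0 /ltW va]; rewrite /= v0 va.
  + by apply: (fin b) => // v /andP[av vb]; rewrite /= (ltW vb) (le_trans a0 av) .
Qed.
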